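(* Let $M,n,d\in\mathbb{N}$ and let ${\bm{x}}_i^m\in\mathbb{R}^d$ ($m\in[M]$, $i\in[n]$) satisfy $\|{\bm{x}}_i^m\|\le 1$, and assume the data are linearly separable, i.e. there is ${\bm{w}}$ with $\langle {\bm{w}},{\bm{x}}_i^m\rangle>0$ for all $m,i$. Let $\gamma=\max_{\|{\bm{w}}\|=1}\min_{m,i}\langle {\bm{w}},{\bm{x}}_i^m\rangle>0$. Let $\ell(z)=\log(1+e^{-z})$, $F_m({\bm{w}})=\frac1n\sum_{i=1}^n\ell(\langle {\bm{w}},{\bm{x}}_i^m\rangle)$, $F=\frac1M\sum_{m=1}^M F_m$. Run Local GD with arbitrary initialization ${\bm{w}}_0\in\mathbb{R}^d$, any stepsize $\eta>0$ and any number of local steps $K\in\mathbb{N}$: for each round $r\ge 0$ and each $m\in[M]$, set ${\bm{w}}_{r,0}^m={\bm{w}}_r$, ${\bm{w}}_{r,k+1}^m={\bm{w}}_{r,k}^m-\eta\nabla F_m({\bm{w}}_{r,k}^m)$ for $k=0,\dots,K-1$, and ${\bm{w}}_{r+1}=\frac1M\sum_{m=1}^M{\bm{w}}_{r,K}^m$. Then for every integer $r\ge 1$, $$\frac1r\sum_{s=0}^{r-1}F({\bm{w}}_s)\le 26\,\frac{\|{\bm{w}}_0\|^2+1+\log^2(K+\eta K\gamma^2 r)+\eta^2K^2}{\eta\gamma^4 r}.$$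
   Context: This is a distributed logistic regression problem where labels have been absorbed into the data (each data point is ${\bm{x}}_i^m$ with label $+1$). $\|\cdot\|$ is the Euclidean norm. *)

(* Defs.v *)
From HB Require Import structures.
From mathcomp Require Import all_boot all_order all_algebra.
From mathcomp Require Import all_classical all_reals all_analysis.
Set Implicit Arguments. Unset Strict Implicit. Unset Printing Implicit Defensive.
Import Order.TTheory GRing.Theory Num.Theory.
Import numFieldNormedType.Exports.
Local Open Scope ring_scope.

Section Defs.
Variable R : realType.

Definition dotp (d : nat) (u v : 'rV[R]_d) : R := \sum_(j < d) u 0 j * v 0 j.
Definition enorm (d : nat) (u : 'rV[R]_d) : R := Num.sqrt (dotp u u).

Definition logistic (z : R) : R := ln (1 + expR (- z)).

Definition Floc (M n d : nat) (x : 'I_M -> 'I_n -> 'rV[R]_d) (m : 'I_M)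
  (w : 'rV[R]_d) : R := n%:R^-1 * \sum_(i < n) logistic (dotp w (x m i)).

Definition Fglob (M n d : nat) (x : 'I_M -> 'I_n -> 'rV[R]_d)
  (w : 'rV[R]_d) : R := M%:R^-1 * \sum_(m < M) Floc x m w.

Definition ebasis (d : nat) (j : 'I_d) : 'rV[R]_d := \row_k (if k == j then 1 else 0).

Definition grad (d : nat) (f : 'rV[R]_d -> R) (w : 'rV[R]_d) : 'rV[R]_d :=
  \row_j ('D_(ebasis j) f w).

Definition local_run (M n d : nat) (x : 'I_M -> 'I_n -> 'rV[R]_d) (eta : R)
  (K : nat) (m : 'I_M) (w : 'rV[R]_d) : 'rV[R]_d :=
  iter K (fun v => v - eta *: grad (Floc x m) v) w.

Fixpoint localGD (M n d : nat) (x : 'I_M -> 'I_n -> 'rV[R]_d) (eta : R)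
  (K : nat) (w0 : 'rV[R]_d) (r : nat) : 'rV[R]_d :=
  match r with
  | 0%N => w0
  | r'.+1 => M%:R^-1 *: \sum_(m < M) local_run x eta K m (localGD x eta K w0 r')
  end.

Definition is_max_margin (M n d : nat) (x : 'I_M -> 'I_n -> 'rV[R]_d) (gamma : R) : Prop :=
  (exists w : 'rV[R]_d, enorm w = 1 /\
      (forall m i, gamma <= dotp w (x m i)) /\ (exists m i, dotp w (x m i) = gamma)) /\
  (forall w : 'rV[R]_d, enorm w = 1 -> exists m i, dotp w (x m i) <= gamma).

End Defs.

(* Main.v *)
Require Import Defs.
From HB Require Import structures.
From mathcomp Require Import all_boot all_order all_algebra.
From mathcomp Require Import all_classical all_reals all_analysis.
From mathcomp Require Import ring lra.
Import Order.TTheory GRing.Theory Num.Theory.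
Import numFieldNormedType.Exports.
Local Open Scope classical_set_scope.
Local Open Scope ring_scope.

Section S.
Context {R : realType}.

Definition sg (z : R) : R := (1 + expR z)^-1.

Lemma is_derive_affine (x c z : R) : is_derive x 1 (fun h : R => h * c + z) c.
Proof.
have H := is_deriveD (is_deriveZ c (is_derive_id x (1:R))) (is_derive_cst z x (1:R)).
rewrite scaler1 addr0 in H.
have -> : (fun h : R => h * c + z) = (c \*: (@id R)) + cst z.
  by apply/funext => h /=; rewrite mulrC.
exact: H.
Qed.

Lemma is_derive_logistic (y : R) : is_derive y 1 (@logistic R) (- sg y).
Proof.
have -> : @logistic R = (@ln R) \o (fun t => 1 + expR (- t)) by [].
have gpos : 0 < 1 + expR (- y) by rewrite addr_gt0 // expR_gt0.
have Hg : is_derive y 1 (fun t : R => 1 + expR (- t)) (expR (- y) * (-1)).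
  have H := is_deriveD (is_derive_cst (1:R) y (1:R)) 
     (is_derive1_comp (is_derive_expR (- y)) (is_deriveNid y (1:R))).
  rewrite add0r in H.
  have -> : (fun t : R => 1 + expR (- t)) = cst 1 + (expR \o -%R) by [].
  exact: H.
have H := @is_derive1_comp R (@ln R) (fun t : R => 1 + expR (- t)) y _ _ (is_derive1_ln gpos) Hg.
apply: (is_derive_eq H).
rewrite /sg expRN.
have e0 : 0 < expR y := expR_gt0 y.
have h1 : 1 + expR y != 0 by rewrite gt_eqF // addr_gt0.
have h2 : expR y != 0 by rewrite gt_eqF.
by field; rewrite h1 h2.
Qed.

Lemma derive_dir (d : nat) (f : 'rV[R]_d -> R) (v e : 'rV[R]_d) :
  'D_e f v = 'D_1 (fun h : R => f (h *: e + v)) 0.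
rewrite /derive; set g1 := fun h => h^-1 *: _; set g2 := fun h => h^-1 *: _; suff -> : g1 = g2 by []; rewrite /g1 /g2; apply/funext => h /=.

by rewrite scale0r add0r addr0 [_%:A]mulr1.
Qed.

Lemma dotp_dir (d : nat) (j : 'I_d) (h : R) (v y : 'rV[R]_d) :
  dotp (h *: ebasis R j + v) y = h * y 0 j + dotp v y.
Proof.
rewrite /dotp /ebasis.
under eq_bigr do rewrite !mxE mulrDl.
rewrite big_split /=; congr (_ + _).
rewrite (bigD1 j) //= eqxx mulr1 big1 ?addr0 // => k /negbTE ->.
by rewrite mulr0 mul0r.
Qed.

Lemma grad_Floc (M n d : nat) (x : 'I_M -> 'I_n -> 'rV[R]_d) (m : 'I_M) (v : 'rV[R]_d) :
  grad (Floc x m) v = \row_j (n%:R^-1 * \sum_(i < n) (- sg (dotp v (x m i))) * x m i 0 j).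
Proof.
apply/rowP => j; rewrite !mxE derive_dir.
have -> : (fun h : R => Floc x m (h *: ebasis R j + v)) =
   n%:R^-1 \*: \sum_(i < n) (fun h : R => logistic (h * x m i 0 j + dotp v (x m i))).
  apply/funext => h; rewrite /Floc /= fct_sumE /=.
  by congr (_ * _); apply: eq_bigr => i _; rewrite dotp_dir.
apply: derive_val.
apply: is_deriveZ; apply: is_derive_sum => i.
have H := @is_derive1_comp R (@logistic R) (fun h : R => h * x m i 0 j + dotp v (x m i)) 0 _ _
   (is_derive_logistic _) (is_derive_affine _ _ _).
by rewrite mul0r add0r in H.
Qed.

Section Dot.
Context {d : nat}.
Implicit Types u v w : 'rV[R]_d.

Lemma dotpC u v : dotp u v = dotp v u.
Proof. by apply: eq_bigr => j _; rewrite mulrC. Qed.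

Lemma dotpDl u v w : dotp (u + v) w = dotp u w + dotp v w.
Proof. by rewrite /dotp -big_split; apply: eq_bigr => j _; rewrite mxE mulrDl. Qed.

Lemma dotpZl (a : R) u v : dotp (a *: u) v = a * dotp u v.
Proof. by rewrite /dotp mulr_sumr; apply: eq_bigr => j _; rewrite mxE mulrA. Qed.

Lemma dotpNl u v : dotp (- u) v = - dotp u v.
Proof. by rewrite -scaleN1r dotpZl mulN1r. Qed.

Lemma dotpBl u v w : dotp (u - v) w = dotp u w - dotp v w.
Proof. by rewrite dotpDl dotpNl. Qed.

Lemma dotpDr u v w : dotp w (u + v) = dotp w u + dotp w v.
Proof. by rewrite dotpC dotpDl !(dotpC w). Qed.

Lemma dotpZr (a : R) u v : dotp v (a *: u) = a * dotp v u.
Proof. by rewrite dotpC dotpZl dotpC. Qed.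

Lemma dotpBr u v w : dotp w (u - v) = dotp w u - dotp w v.
Proof. by rewrite dotpC dotpBl !(dotpC w). Qed.

Lemma dotp_suml (I : Type) (s : seq I) (f : I -> 'rV[R]_d) v :
  dotp (\sum_(i <- s) f i) v = \sum_(i <- s) dotp (f i) v.
Proof.
elim: s => [|a s IH]; first by rewrite !big_nil /dotp big1 // => j _; rewrite mxE mul0r.
by rewrite !big_cons dotpDl IH.
Qed.

Lemma dotp_ge0 u : 0 <= dotp u u.
Proof. by apply: sumr_ge0 => j _; rewrite -expr2 sqr_ge0. Qed.

Lemma dotp_sqr u v : dotp (u + v) (u + v) = dotp u u + 2 * dotp u v + dotp v v.
Proof. rewrite dotpDl !dotpDr (dotpC v u); ring. Qed.

End Dot.

Lemma sum_sqr_le (N : nat) (a : 'I_N -> R) :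
  (\sum_(i < N) a i) ^+ 2 <= N%:R * \sum_(i < N) a i ^+ 2.
Proof.
case: N a => [|N] a; first by rewrite !big_ord0 mul0r expr2 mul0r.
set S := \sum_(i < N.+1) a i; set Q := \sum_(i < N.+1) a i ^+ 2.
set mu := S / N.+1%:R.
have hN : 0 < N.+1%:R :> R by rewrite ltr0n.
have H : 0 <= \sum_(i < N.+1) (a i - mu) ^+ 2 by apply: sumr_ge0 => i _; exact: sqr_ge0.
have E : \sum_(i < N.+1) (a i - mu) ^+ 2 = Q - 2 * mu * S + N.+1%:R * mu ^+ 2.
  rewrite /Q /S.
  under eq_bigr do rewrite sqrrB.
  rewrite big_split /= sumrB sumr_const card_ord -mulr_natl mulr_sumr.
  congr (_ - _ + _).
  by apply: eq_bigr => i _; rewrite -mulr_natl; ring.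
  by rewrite mulr_natl.
rewrite E /mu in H.
have : 0 <= N.+1%:R * (Q - 2 * (S / N.+1%:R) * S + N.+1%:R * (S / N.+1%:R) ^+ 2).
  by rewrite mulr_ge0 // ltW.
have -> : N.+1%:R * (Q - 2 * (S / N.+1%:R) * S + N.+1%:R * (S / N.+1%:R) ^+ 2) =
   N.+1%:R * Q - S ^+ 2.
  by field; rewrite gt_eqF.
by rewrite subr_ge0.
Qed.

Lemma dotp_sum_le (d N : nat) (f : 'I_N -> 'rV[R]_d) :
  dotp (\sum_(i < N) f i) (\sum_(i < N) f i) <= N%:R * \sum_(i < N) dotp (f i) (f i).
Proof.
rewrite /dotp [X in _ <= _ * X]exchange_big /= mulr_sumr.
apply: ler_sum => j _.
rewrite -expr2.
have -> : (\sum_(i < N) f i) 0 j = \sum_(i < N) f i 0 j by rewrite summxE.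
have H := @sum_sqr_le N (fun i => f i 0 j). simpl in H. under [X in _ <= _ * X]eq_bigr do rewrite -expr2. exact: H.
Qed.

Lemma sg_gt0 (z : R) : 0 < sg z.
Proof. by rewrite /sg invr_gt0 addr_gt0 // expR_gt0. Qed.

Lemma sg_le1 (z : R) : sg z <= 1.
Proof. by rewrite /sg invf_le1 ?addr_gt0 ?expR_gt0 // lerDl expR_ge0. Qed.

Lemma logistic_ge0 (z : R) : 0 <= logistic z.
Proof. by rewrite /logistic ln_ge0 // lerDl expR_ge0. Qed.

Lemma logistic_le_exp (z : R) : logistic z <= expR (- z).
Proof. rewrite /logistic le_ln1Dx //; apply: (lt_le_trans _ (expR_ge0 _)); by rewrite ltrN10. Qed.

Lemma logistic_convex (a b : R) : logistic a + sg a * (a - b) <= logistic b.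
Proof.
set u := sg a * (a - b); set A := expR a.
have A0 : 0 < A by exact: expR_gt0.
have ht : a - b = u + A * u.
  rewrite /u /sg -/A; field; by rewrite gt_eqF // addr_gt0.
have eb : expR (- b) = expR u * expR (A * u) / A.
  rewrite -expRD -ht /A -expRN -expRD; congr expR; ring.
have ea : expR (- a) = A^-1 by rewrite expRN.
rewrite /logistic -[u in _ + u]expRK -lnM; last 2 first.
- by rewrite posrE addr_gt0 // expR_gt0.
- by rewrite posrE expR_gt0.
rewrite ler_ln; last 2 first.
- by rewrite posrE mulr_gt0 // ?addr_gt0 // expR_gt0.
- by rewrite posrE addr_gt0 // expR_gt0.
rewrite ea eb.
have h1 : 1 - u <= expR (- u) by rewrite -[1 - u]/(1 + - u) expR_ge1Dx.
have h2 : 1 + A * u <= expR (A * u) by exact: expR_ge1Dx.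
have eu : expR u * expR (- u) = 1 by rewrite -expRD subrr expR0.
have k1 : expR u * (1 - u) <= 1.
  rewrite -[X in _ <= X]eu; apply: ler_wpM2l; [exact: expR_ge0 | exact: h1].
have k2 : A^-1 * expR u * (1 + A * u) <= A^-1 * expR u * expR (A * u).
  by rewrite ler_wpM2l // mulr_ge0 // ?expR_ge0 // invr_ge0 ltW.
have k3 : A^-1 * expR u * (1 + A * u) = A^-1 * expR u + u * expR u.
  by field; rewrite gt_eqF.
have k4 : expR u * expR (A * u) / A = A^-1 * expR u * expR (A * u) by rewrite mulrC mulrA.
rewrite k4; nra.
Qed.

Section Client.
Variables (M n d : nat) (x : 'I_M -> 'I_n -> 'rV[R]_d) (m : 'I_M).

Definition gF (v : 'rV[R]_d) : 'rV[R]_d :=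
  n%:R^-1 *: \sum_(i < n) sg (dotp v (x m i)) *: x m i.
Definition Gm (v : 'rV[R]_d) : R := n%:R^-1 * \sum_(i < n) sg (dotp v (x m i)).

Lemma grad_eq v : grad (Floc x m) v = - gF v.
Proof.
rewrite grad_Floc; apply/rowP => j; rewrite !mxE summxE -mulrN -sumrN; congr (_ * _).
apply: eq_bigr => i _; rewrite !mxE; ring.
Qed.

Lemma Gm_ge0 v : 0 <= Gm v.
Proof. by rewrite mulr_ge0 // ?invr_ge0 // sumr_ge0 // => i _; rewrite ltW // sg_gt0. Qed.

Lemma gF_sq v : (0 < n)%N -> (forall i, dotp (x m i) (x m i) <= 1) ->
  dotp (gF v) (gF v) <= Gm v.
Proof.
move=> n0 hx; rewrite /gF /Gm dotpZl dotpZr.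
have hn : 0 < n%:R :> R by rewrite ltr0n.
apply: (le_trans (y := n%:R^-1 * (n%:R^-1 * (n%:R * \sum_(i < n)
   dotp (sg (dotp v (x m i)) *: x m i) (sg (dotp v (x m i)) *: x m i))))).
  apply: ler_wpM2l; first by rewrite invr_ge0 ltW.
  apply: ler_wpM2l; first by rewrite invr_ge0 ltW.
  exact: dotp_sum_le.
rewrite [n%:R^-1 * (n%:R * _)]mulrA mulVf ?gt_eqF // mul1r; apply: ler_wpM2l; first by rewrite invr_ge0 ltW.
apply: ler_sum => i _; rewrite dotpZl dotpZr.
have s0 := sg_gt0 (dotp v (x m i)); have s1 := sg_le1 (dotp v (x m i)).
have := hx i; have := dotp_ge0 (x m i); nra.
Qed.

Lemma gF_ws (gamma : R) (ws v : 'rV[R]_d) : (forall i, gamma <= dotp ws (x m i)) ->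
  gamma * Gm v <= dotp (gF v) ws.
Proof.
move=> hw; rewrite /gF /Gm dotpZl mulrCA; apply: ler_wpM2l; first by rewrite invr_ge0 ler0n.
rewrite dotp_suml mulr_sumr; apply: ler_sum => i _.
rewrite dotpZl (dotpC (x m i)) mulrC; apply: ler_wpM2l => //.
by rewrite ltW // sg_gt0.
Qed.

Lemma Floc_convex (u v : 'rV[R]_d) :
  Floc x m v + dotp (gF v) (v - u) <= Floc x m u.
Proof.
rewrite /Floc /gF dotpZl -mulrDr; apply: ler_wpM2l; first by rewrite invr_ge0 ler0n.
rewrite dotp_suml -big_split /=; apply: ler_sum => i _.
rewrite dotpZl dotpBr (dotpC (x m i) v) (dotpC (x m i) u).
exact: logistic_convex.
Qed.


Lemma step_ineq (v u1 ws : 'rV[R]_d) (gamma eta : R) :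
  (0 < n)%N -> (forall i, dotp (x m i) (x m i) <= 1) ->
  (forall i, gamma <= dotp ws (x m i)) -> 0 < gamma -> 0 < eta ->
  dotp (v + eta *: gF v - (u1 + (eta / (2 * gamma)) *: ws))
       (v + eta *: gF v - (u1 + (eta / (2 * gamma)) *: ws))
  <= dotp (v - (u1 + (eta / (2 * gamma)) *: ws)) (v - (u1 + (eta / (2 * gamma)) *: ws))
     - 2 * eta * Floc x m v + 2 * eta * Floc x m u1.
Proof.
move=> n0 hx hw g0 e0.
set c := eta / (2 * gamma).
set g := gF v.
have -> : v + eta *: g - (u1 + c *: ws) = (v - (u1 + c *: ws)) + eta *: g.
  by rewrite addrAC.
set P := v - (u1 + c *: ws).
have e1 : dotp P (eta *: g) = eta * (dotp g (v - u1) - c * dotp g ws).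
  by rewrite dotpZr dotpC /P opprD addrA !dotpBr dotpZr.
have e2 : dotp (eta *: g) (eta *: g) = eta * (eta * dotp g g).
  by rewrite dotpZl dotpZr.
rewrite (dotp_sqr P (eta *: g)) e1 e2.
have h1 := Floc_convex u1 v; rewrite -/g in h1.
have h2 := gF_ws gamma ws v hw; rewrite -/g in h2.
have h3 := gF_sq v n0 hx; rewrite -/g in h3.
have G0 := Gm_ge0 v.
have hc : c * gamma = eta / 2 by rewrite /c; field; rewrite gt_eqF.
have c0 : 0 <= c by rewrite /c divr_ge0 // ?ltW // mulr_gt0.
have k1 : eta * dotp g (v - u1) <= eta * (Floc x m u1 - Floc x m v).
  by apply: ler_wpM2l; [exact: ltW | lra].
have k2 : eta * c * (gamma * Gm v) <= eta * c * dotp g ws.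
  by apply: ler_wpM2l => //; rewrite mulr_ge0 // ltW.
have k3 : eta * eta * dotp g g <= eta * eta * Gm v.
  by apply: ler_wpM2l => //; rewrite mulr_ge0 // ltW.
have k4 : eta * c * (gamma * Gm v) = eta * eta / 2 * Gm v.
  by rewrite mulrA -(mulrA eta) hc; ring.

rewrite dotpBr in k1.
nra.
Qed.


Lemma client_ineq (w u1 ws u : 'rV[R]_d) (gamma eta : R) (K : nat) :
  u = u1 + (eta / (2 * gamma)) *: ws ->
  (0 < n)%N -> (forall i, dotp (x m i) (x m i) <= 1) ->
  (forall i, gamma <= dotp ws (x m i)) -> 0 < gamma -> 0 < eta -> (1 <= K)%N ->
  dotp (local_run x eta K m w - u) (local_run x eta K m w - u)
  <= dotp (w - u) (w - u) - 2 * eta * Floc x m w + 2 * eta * K%:R * Floc x m u1.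
Proof.
move=> hu n0 hx hw g0 e0 K1.
have step v : v - eta *: grad (Floc x m) v = v + eta *: gF v.
  by rewrite grad_eq scalerN opprK.
have Fu0 : 0 <= Floc x m u1.
  by rewrite mulr_ge0 ?invr_ge0 // sumr_ge0 // => i _; exact: logistic_ge0.
have Fv0 v : 0 <= Floc x m v.
  by rewrite mulr_ge0 ?invr_ge0 // sumr_ge0 // => i _; exact: logistic_ge0.
have it k v : dotp (iter k (fun v => v - eta *: grad (Floc x m) v) v - u)
                   (iter k (fun v => v - eta *: grad (Floc x m) v) v - u)
              <= dotp (v - u) (v - u) + 2 * eta * k%:R * Floc x m u1.
  elim: k => [|k IH] /=; first by rewrite mulr0 mul0r addr0.
  rewrite step hu; apply: le_trans (step_ineq _ _ _ _ _ n0 hx hw g0 e0) _; rewrite -hu.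
  have := Fv0 (iter k (fun v0 : 'rV_d => v0 - eta *: grad (Floc x m) v0) v).
  rewrite -[k.+1]addn1 natrD; nra.
case: K K1 => [|K] // _.
rewrite /local_run iterSr.
apply: le_trans (it K _) _.
rewrite step.
have := step_ineq w u1 ws gamma eta n0 hx hw g0 e0.
rewrite -hu -[K.+1]addn1 natrD; nra.
Qed.

End Client.

Lemma round_ineq (M n d : nat) (x : 'I_M -> 'I_n -> 'rV[R]_d) (w u1 ws u : 'rV[R]_d)
  (gamma eta : R) (K : nat) :
  u = u1 + (eta / (2 * gamma)) *: ws -> (0 < M)%N -> (0 < n)%N ->
  (forall m i, dotp (x m i) (x m i) <= 1) ->
  (forall m i, gamma <= dotp ws (x m i)) -> 0 < gamma -> 0 < eta -> (1 <= K)%N ->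
  dotp (M%:R^-1 *: \sum_(m < M) local_run x eta K m w - u)
       (M%:R^-1 *: \sum_(m < M) local_run x eta K m w - u)
  <= dotp (w - u) (w - u) - 2 * eta * Fglob x w + 2 * eta * K%:R * Fglob x u1.
Proof.
move=> hu M0 n0 hx hw g0 e0 K1.
have hM : 0 < M%:R :> R by rewrite ltr0n.
have E : M%:R^-1 *: \sum_(m < M) local_run x eta K m w - u =
         M%:R^-1 *: \sum_(m < M) (local_run x eta K m w - u).
  rewrite sumrB sumr_const card_ord scalerBr (_ : u *+ M = M%:R *: u); last by rewrite scaler_nat.
  rewrite scalerA mulVf ?gt_eqF //.
  by rewrite scale1r.
rewrite E dotpZl dotpZr.
apply: (le_trans (y := M%:R^-1 * (M%:R^-1 * (M%:R * \sum_(m < M)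
    (dotp (w - u) (w - u) - 2 * eta * Floc x m w + 2 * eta * K%:R * Floc x m u1))))).
  apply: ler_wpM2l; first by rewrite invr_ge0 ltW.
  apply: ler_wpM2l; first by rewrite invr_ge0 ltW.
  apply: le_trans; first exact: dotp_sum_le.
  apply: ler_wpM2l; first by rewrite ltW.
  apply: ler_sum => m _.
  exact: (@client_ineq M n d x m _ _ _ _ _ _ _ hu n0 (hx m) (hw m) g0 e0 K1).
rewrite /Fglob big_split /= sumrB /= sumr_const card_ord -!mulr_sumr.
rewrite le_eqVlt; apply/orP; left; apply/eqP.
rewrite -mulr_natr; field.
by rewrite !pnatr_eq0 -!lt0n n0 M0.
Qed.

Lemma telescope (M n d : nat) (x : 'I_M -> 'I_n -> 'rV[R]_d) (w0 u1 ws u : 'rV[R]_d)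
  (gamma eta : R) (K : nat) :
  u = u1 + (eta / (2 * gamma)) *: ws -> (0 < M)%N -> (0 < n)%N ->
  (forall m i, dotp (x m i) (x m i) <= 1) ->
  (forall m i, gamma <= dotp ws (x m i)) -> 0 < gamma -> 0 < eta -> (1 <= K)%N ->
  forall r : nat,
  dotp (localGD x eta K w0 r - u) (localGD x eta K w0 r - u)
  <= dotp (w0 - u) (w0 - u) - 2 * eta * \sum_(s < r) Fglob x (localGD x eta K w0 s)
     + 2 * eta * K%:R * r%:R * Fglob x u1.
Proof.
move=> hu M0 n0 hx hw g0 e0 K1; elim => [|r IH].
  rewrite big_ord0 !mulr0 mul0r subr0 addr0 //.
rewrite /= big_ord_recr /=.
have := @round_ineq M n d x (localGD x eta K w0 r) u1 ws u gamma eta K hu M0 n0 hx hw g0 e0 K1. move=> H.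
rewrite -[r.+1]addn1 natrD; lra.
Qed.

Lemma avg_le (N : nat) (a : 'I_N -> R) (B : R) : (0 < N)%N ->
  (forall i, a i <= B) -> N%:R^-1 * \sum_(i < N) a i <= B.
Proof.
move=> N0 h; have hN : 0 < N%:R :> R by rewrite ltr0n.
have S : \sum_(i < N) a i <= N%:R * B.
  have -> : N%:R * B = \sum_(i < N) B by rewrite sumr_const card_ord mulr_natl.
  exact: ler_sum.
apply: (le_trans (y := N%:R^-1 * (N%:R * B))).
  by apply: ler_wpM2l => //; rewrite invr_ge0 ltW.
by rewrite mulrA mulVf ?gt_eqF // mul1r.
Qed.

Lemma dotp_le1 (d : nat) (y : 'rV[R]_d) : enorm y <= 1 -> dotp y y <= 1.
Proof.
move=> h; rewrite -(sqr_sqrtr (dotp_ge0 y)) -/(enorm y).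
have h0 : 0 <= enorm y by rewrite /enorm sqrtr_ge0.
by rewrite expr_le1.
Qed.

End S.

Theorem theorem4p1 (R : realType) (M n d : nat) (x : 'I_M -> 'I_n -> 'rV[R]_d)
  (gamma eta : R) (K : nat) (w0 : 'rV[R]_d) :
  (0 < M)%N -> (0 < n)%N ->
  (forall m i, enorm (x m i) <= 1) ->
  (exists w : 'rV[R]_d, forall m i, 0 < dotp w (x m i)) ->
  is_max_margin x gamma -> 0 < gamma ->
  0 < eta -> (1 <= K)%N ->
  forall r : nat, (1 <= r)%N ->
    r%:R^-1 * \sum_(s < r) Fglob x (localGD x eta K w0 s)
    <= 26 * ((enorm w0) ^+ 2 + 1
             + (ln (K%:R + eta * K%:R * gamma ^+ 2 * r%:R)) ^+ 2
             + eta ^+ 2 * K%:R ^+ 2)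
          / (eta * gamma ^+ 4 * r%:R).
Proof.
move=> M0 n0 hxn _ [[ws [hws [hw _]]] _] g0 e0 K1 r r1.
have hx m i : dotp (x m i) (x m i) <= 1 by exact: dotp_le1.
have hws1 : dotp ws ws = 1.
  by move: hws; rewrite /enorm => h; rewrite -(sqr_sqrtr (dotp_ge0 ws)) h expr1n.
have g1 : gamma <= 1.
  have := hw (Ordinal M0) (Ordinal n0); have := hx (Ordinal M0) (Ordinal n0).
  have := dotp_ge0 (ws - x (Ordinal M0) (Ordinal n0)).
  rewrite dotpBl !dotpBr hws1 (dotpC (x _ _) ws); lra.
have hK : 1 <= K%:R :> R by rewrite ler1n.
have hr : 1 <= r%:R :> R by rewrite ler1n.
set Z := K%:R + eta * K%:R * gamma ^+ 2 * r%:R.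
have Z1 : 1 <= Z.
  rewrite /Z; have : 0 <= eta * K%:R * gamma ^+ 2 * r%:R.
    by rewrite !mulr_ge0 // ?ltW // ?sqr_ge0 // (le_trans _ hK) // (le_trans _ hr).
  lra.
have Z0 : 0 < Z by lra.
set L := ln Z.
have L0 : 0 <= L by exact: ln_ge0.
set u1 := (L / gamma) *: ws.
set u := u1 + (eta / (2 * gamma)) *: ws.
have FU : Fglob x u1 <= Z^-1.
  apply: avg_le => // m; apply: avg_le => // i.
  apply: (le_trans (logistic_le_exp _)).
  have -> : Z^-1 = expR (- L) by rewrite expRN lnK // posrE.
  rewrite ler_expR lerN2 /u1 dotpZl.
  have h := hw m i.
  have -> : L / gamma * dotp ws (x m i) = L * (dotp ws (x m i) / gamma) by ring.
  have h' : 1 <= dotp ws (x m i) / gamma by rewrite ler_pdivlMr // mul1r.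
  have := ler_wpM2l L0 h'; rewrite mulr1; exact.
have TEL := @telescope R M n d x w0 u1 ws u gamma eta K erefl M0 n0 hx hw g0 e0 K1 r.
have N0 := dotp_ge0 (localGD x eta K w0 r - u).
set S := \sum_(s < r) Fglob x (localGD x eta K w0 s) in TEL *.
have hA : enorm w0 ^+ 2 = dotp w0 w0 by rewrite /enorm sqr_sqrtr // dotp_ge0.
rewrite hA.
set A := dotp w0 w0.
have A0 : 0 <= A by exact: dotp_ge0.
set mu := L / gamma + eta / (2 * gamma).
have hu : u = mu *: ws by rewrite /u /u1 scalerDl.
have uu : dotp u u = mu ^+ 2 by rewrite hu dotpZl dotpZr hws1 mulr1 expr2.
have D0 : dotp (w0 - u) (w0 - u) <= 2 * A + 2 * mu ^+ 2.
  have E : dotp (w0 - u) (w0 - u) + dotp (w0 + u) (w0 + u) = 2 * A + 2 * dotp u u.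
    rewrite dotpBl !dotpBr dotpDl !dotpDr (dotpC u w0) /A; ring.
  have := dotp_ge0 (w0 + u); rewrite -uu; lra.
have hrK : 0 <= eta * K%:R * r%:R by rewrite !mulr_ge0 // ?ltW // (le_trans _ hK) // (le_trans _ hr).
have FU' : eta * K%:R * r%:R * Fglob x u1 <= eta * K%:R * r%:R * Z^-1 by apply: ler_wpM2l.
set W := eta * K%:R * r%:R * Z^-1 in FU'.
have Sb : eta * S <= A + mu ^+ 2 + W.
  have : 2 * eta * S <= 2 * A + 2 * mu ^+ 2 + 2 * (eta * K%:R * r%:R * Fglob x u1).
    have e : 2 * eta * K%:R * r%:R * Fglob x u1 = 2 * (eta * K%:R * r%:R * Fglob x u1) by ring.
    lra.
  lra.
set g2 := gamma ^+ 2.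
have g20 : 0 <= g2 by rewrite /g2 sqr_ge0.
have g21 : g2 <= 1 by rewrite /g2 expr_le1 // ltW.
have WZ : W * g2 <= 1.
  rewrite /W -mulrA (mulrC _ g2) mulrA ler_pdivrMr // mul1r /Z /g2.
  have : 0 <= K%:R :> R by rewrite ler0n.
  have : eta * K%:R * r%:R * gamma ^+ 2 = eta * K%:R * gamma ^+ 2 * r%:R by ring.
  lra.
have W0 : 0 <= W by rewrite /W mulr_ge0 // invr_ge0 ltW.
have mg : mu * gamma = L + eta / 2 by rewrite /mu; field; rewrite gt_eqF.
have P3 : mu ^+ 2 * (g2 * g2) = (L + eta / 2) ^+ 2 * g2 by rewrite -mg /g2; ring.
have P1 : eta * S * (g2 * g2) <= (A + mu ^+ 2 + W) * (g2 * g2).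
  by apply: ler_wpM2r => //; rewrite mulr_ge0.
have P2 : A * (g2 * g2) <= A.
  rewrite -[X in _ <= X]mulr1; apply: ler_wpM2l => //.
  by rewrite -[1]mulr1; apply: ler_pM.
have P4 : (L + eta / 2) ^+ 2 * g2 <= (L + eta / 2) ^+ 2.
  rewrite -[X in _ <= X]mulr1; apply: ler_wpM2l => //; exact: sqr_ge0.
have P5 : W * (g2 * g2) <= 1.
  rewrite mulrA -[1]mulr1; apply: ler_pM => //; rewrite mulr_ge0 //.
have P6 : (L + eta / 2) ^+ 2 <= 2 * L ^+ 2 + eta ^+ 2 / 2.
  have := sqr_ge0 (L - eta / 2); rewrite !expr2; lra.
have P7 : eta ^+ 2 <= eta ^+ 2 * K%:R ^+ 2.
  rewrite -[X in X <= _]mulr1; apply: ler_wpM2l; first exact: sqr_ge0.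
  by rewrite expr_ge1 // (le_trans _ hK).
have hpos : 0 < eta * gamma ^+ 4 * r%:R.
  by rewrite !mulr_gt0 // ?exprn_gt0 // (lt_le_trans _ hr).
rewrite ler_pdivlMr //.
have -> : r%:R^-1 * S * (eta * gamma ^+ 4 * r%:R) = eta * S * (g2 * g2).
  rewrite /g2; field; by rewrite gt_eqF // (lt_le_trans _ hr).
have e4 : (A + mu ^+ 2 + W) * (g2 * g2) = A * (g2 * g2) + mu ^+ 2 * (g2 * g2) + W * (g2 * g2) by ring.
have := sqr_ge0 L; have := sqr_ge0 eta.
lra.
Qed.
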